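(* Let $L$ be a multisorted algebra in the positive quantifier-free signature satisfying axioms (1), (2), (3), and let $F$ be a prime filter of the lattice forming sort $n$ of $L$. Let $F_1,\dots,F_n$ be distinct symbols and $W=\{F_1,\dots,F_n\}$. Define $\varphi\colon L\to A(W)$ on each sort $k$ by $$\varphi(r)=\{\alpha^{\mathrm{tuple}}(F_1,\dots,F_n)\mid \alpha\colon k\to n \text{ a substitution with } \alpha(r)\in F\}.$$ Then $\varphi$ is a morphism of positive quantifier-free algebras.
   Context: Signature. There is a sort $n$ for each natural number $n\ge 0$. For every function $\alpha\colon\{1,\dots,n\}\to\{1,\dots,k\}$ there is a unary function symbol (''substitution'') $\alpha\colon n\to k$ (argument of sort $n$, value of sort $k$). For each sort there are constants $0,1$ and binary operations $\vee,\wedge$. This is the positive quantifier-free signature. If $\alpha\colon k\to n$, $\beta\colon n\to m$ are substitutions, $\beta\circ\alpha\colon k\to m$ is the substitution symbol of the composite function, while $\beta(\alpha(r))$ is composition inside an algebra. For a set $W$ and substitution $\alpha\colon\{1,\dots,n\}\to\{1,\dots,k\}$: $\alpha^{\mathrm{tuple}}\colon W^k\to W^n$, $\alpha^{\mathrm{tuple}}(x_1,\dots,x_k)=(x_{\alpha(1)},\dots,x_{\alpha(n)})$, and $\alpha^{\mathrm{relation}}(r)=\{\bar x\in W^k:\alpha^{\mathrm{tuple}}(\bar x)\in r\}$ for $r\subseteq W^n$. The positive quantifier-free algebra $A(W)$ interprets sort $n$ as $\mathcal P(W^n)$, $\alpha$ as $\alpha^{\mathrm{relation}}$, and $0,1,\vee,\wedge$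 as $\emptyset,W^n,\cup,\cap$. A morphism is a sort-preserving family of maps commuting with all operations. Axioms: (1) each sort is a bounded distributive lattice under $0,1,\vee,\wedge$; (2) every substitution preserves $0,1,\vee,\wedge$; (3) $(\beta\circ\alpha)(r)=\beta(\alpha(r))$ for all composable substitutions $\alpha\colon k\to n$, $\beta\colon n\to m$ and $r$ of sort $k$. A prime filter of a bounded distributive lattice is a proper, nonempty, upward-closed subset closed under $\wedge$ such that $x\vee y\in F$ implies $x\in F$ or $y\in F$. *)

(* Defs.v *)
From mathcomp Require Import all_boot.
Set Implicit Arguments. Unset Strict Implicit. Unset Printing Implicit Defensive.

(* Positive quantifier-free signature: sorts are natural numbers n >= 0.
   A substitution symbol alpha : n -> k is a function 'I_n -> 'I_k
   (i.e. {1..n} -> {1..k}); it sends sort n to sort k. *)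
Record pqf_alg := PQFAlg {
  car : nat -> Type;
  subst : forall n k : nat, ('I_n -> 'I_k) -> car n -> car k;
  zero : forall n, car n;
  one : forall n, car n;
  join : forall n, car n -> car n -> car n;
  meet : forall n, car n -> car n -> car n
}.
Arguments subst {_ n k} _ _.
Arguments zero {_} n.
Arguments one {_} n.
Arguments join {_ n} _ _.
Arguments meet {_ n} _ _.

Definition bdl_axioms (T : Type) (z o : T) (j m : T -> T -> T) : Prop :=
  [/\ (forall x y w, j x (j y w) = j (j x y) w),
      (forall x y w, m x (m y w) = m (m x y) w),
      (forall x y, j x y = j y x),
      (forall x y, m x y = m y x) &
   [/\ (forall x y, j x (m x y) = x),
       (forall x y, m x (j x y) = x),
       (forall x y w, m x (j y w) = j (m x y) (m x w)),
       (forall x, j x z = x) &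
       (forall x, m x o = x)]].

Definition pqf_axioms (L : pqf_alg) : Prop :=
  [/\ (forall n, bdl_axioms (@zero L n) (@one L n) (@join L n) (@meet L n)),
      (forall n k (a : 'I_n -> 'I_k),
                   [/\ subst a (@zero L n) = @zero L k,
                       subst a (@one L n) = @one L k,
                       (forall x y : car L n, subst a (join x y) = join (subst a x) (subst a y)) &
                       (forall x y : car L n, subst a (meet x y) = meet (subst a x) (subst a y))]) &
      (forall k n m (a : 'I_k -> 'I_n) (b : 'I_n -> 'I_m) (r : car L k),
                   subst (fun i => b (a i)) r = subst b (subst a r))].

Definition lat_le (L : pqf_alg) (n : nat) (x y : car L n) : Prop := meet x y = x.

Definition prime_filter (L : pqf_alg) (n : nat) (F : car L n -> Prop) : Prop :=
  [/\ (exists x, ~ F x),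
      (exists x, F x),
      (forall x y, F x -> lat_le x y -> F y),
      (forall x y, F x -> F y -> F (meet x y)) &
      (forall x y, F (join x y) -> F x \/ F y)].

(* The positive quantifier-free algebra A(W): sort n is P(W^n), tuples being
   functions 'I_n -> W, subsets being predicates. *)
Definition A_alg (W : Type) : pqf_alg :=
  @PQFAlg (fun n => ('I_n -> W) -> Prop)
    (fun n k (a : 'I_n -> 'I_k) (r : ('I_n -> W) -> Prop) =>
       fun x : 'I_k -> W => r (fun i => x (a i)))
    (fun n _ => False)
    (fun n _ => True)
    (fun n r s x => r x \/ s x)
    (fun n r s x => r x /\ s x).

Definition is_morphism (L M : pqf_alg) (f : forall n, car L n -> car M n) : Prop :=
  [/\ (forall n k (a : 'I_n -> 'I_k) (r : car L n), f k (subst a r) = subst a (f n r)),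
      (forall n, f n (@zero L n) = @zero M n),
      (forall n, f n (@one L n) = @one M n),
      (forall n (x y : car L n), f n (join x y) = join (f n x) (f n y)) &
      (forall n (x y : car L n), f n (meet x y) = meet (f n x) (f n y))].

Definition phi (L : pqf_alg) (n : nat) (F : car L n -> Prop) (W : Type)
  (Fs : 'I_n -> W) : forall k, car L k -> car (A_alg W) k :=
  fun k r => fun x : 'I_k -> W =>
    exists a : 'I_k -> 'I_n, x = (fun i => Fs (a i)) /\ F (subst a r).

(* Main.v *)
From Stdlib Require Import FunctionalExtensionality PropExtensionality ClassicalEpsilon.
Require Import Defs.
From mathcomp Require Import all_boot.

Theorem lemma3p3 (L : pqf_alg) (HL : pqf_axioms L) (n : nat)
  (F : car L n -> Prop) (HF : prime_filter F)
  (W : Type) (Fs : 'I_n -> W) (Fs_inj : injective Fs)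
  (Fs_surj : forall w : W, exists i, Fs i = w) :
  is_morphism (M := A_alg W) (phi F Fs).
Proof.
have pick : forall k (x : 'I_k -> W), exists b : 'I_k -> 'I_n, x = (fun i => Fs (b i)).
  move=> k x.
  exists (fun i => proj1_sig (constructive_indefinite_description _ (Fs_surj (x i)))).
  apply: functional_extensionality => i.
  by case: (constructive_indefinite_description _ _).
have injc : forall k (a b : 'I_k -> 'I_n),
    (fun i => Fs (a i)) = (fun i => Fs (b i)) -> a = b.
  move=> k a b E; apply: functional_extensionality => i.
  by apply: Fs_inj; move: (f_equal (fun f => f i) E).
case: HL => Hlat Hsub Hcomp.
case: (Hlat n) => jA mA jC mC [jm mj md j0 m1].
case: HF => [[p Hp] [q Hq] Hup Hmeet Hprime].
have meet0 : forall y : car L n, meet (Defs.zero n) y = Defs.zero n.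
  move=> y; have := mj (Defs.zero n) y.
  by rewrite jC j0.
have F0 : ~ F (Defs.zero n).
  move=> H0; apply: Hp; apply: (Hup _ _ H0); exact: meet0.
have F1 : F (Defs.one n) by apply: (Hup _ _ Hq); exact: m1.
have midem : forall x : car L n, meet x x = x.
  by move=> x; rewrite -{2}(jm x x) mj.
split.
- move=> m k a r; apply: functional_extensionality => x /=.
  apply: propositional_extensionality; split.
  + case=> b [-> Hb]; exists (fun i => b (a i)); split => //.
    by rewrite Hcomp.
  + case=> c [Ex Hc]; case: (pick _ x) => b Eb; exists b; split => //.
    have E : (fun i => b (a i)) = c.
      apply: injc; rewrite -Ex Eb //.
    by rewrite -Hcomp E.
- move=> k; apply: functional_extensionality => x /=.
  apply: propositional_extensionality; split => //.
  case=> a [_ Ha]; apply: F0; by case: (Hsub k n a) Ha => -> _ _ _.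
- move=> k; apply: functional_extensionality => x /=.
  apply: propositional_extensionality; split => // _.
  case: (pick _ x) => b Eb; exists b; split => //.
  by case: (Hsub k n b) => _ -> _ _.
- move=> k r s; apply: functional_extensionality => x /=.
  apply: propositional_extensionality; split.
  + case=> a [Ex Ha]; case: (Hsub k n a) Ha => _ _ -> _ Ha.
    case: (Hprime _ _ Ha) => H; [left | right]; exists a; by split.
  + case; case=> a [Ex Ha]; exists a; split => //;
      case: (Hsub k n a) => _ _ -> _; apply: (Hup _ _ Ha).
    * exact: mj.
    * by rewrite /lat_le (jC (subst a r)) mj.
- move=> k r s; apply: functional_extensionality => x /=.
  apply: propositional_extensionality; split.
  + case=> a [Ex Ha]; case: (Hsub k n a) Ha => _ _ _ -> Ha.
    split; exists a; split => //; apply: (Hup _ _ Ha); rewrite /lat_le.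
    * by rewrite (mC (meet _ _)) mA midem.
    * by rewrite -mA midem.
  + case=> [[a [Ea Ha]] [b [Eb Hb]]].
    have E : a = b by apply: injc; rewrite -Ea -Eb.
    subst b; exists a; split => //.
    case: (Hsub k n a) => _ _ _ ->; exact: Hmeet.
Qed.
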